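(* Assume $p\nmid a$. For all integers $r,s,t$ there exists a constant $C$ (depending on $r,s,t$) such that for every integer $v\ge C$, $$\#\Omega_{v,r,s,t}=1-g+v+(q^{a-1}-1)r+q^{b-1}s+(q-1)t.$$
   Context: Let $p$ be a prime, $q$ a power of $p$, $b\ge1$ an integer, $a=b+1$, $c=a+b$, $N_k=(q^k-1)/(q-1)$, and $g=\frac12\big((q^c-2)(q^{a-1}+q^{b-1}-2)+(q^c-q)\big)$. For integers $v,r,s,t$ define the lattice point set $\Omega_{v,r,s,t}=\{(i,j,k)\in\mathbb{Z}^3:\ -v\le i,\ \ -r\le i+(q^c-1)k<-r+(q^c-1),\ \ -s\le -q^ai+(q^c-1)j<(q^c-1)-s,\ \ -t\le q^{a-1}N_b\,i-q^{b-1}N_c\,j-(q^{a-1}-1)N_c\,k\}$. *)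

(* Defs.v *)
From HB Require Import structures.
From mathcomp Require Import all_boot all_order all_algebra.
Set Implicit Arguments. Unset Strict Implicit. Unset Printing Implicit Defensive.
Import Order.TTheory GRing.Theory Num.Theory.
Local Open Scope ring_scope.

(* N_k = (q^k - 1)/(q - 1), as an integer (exact division for q >= 2). *)
Definition Nk (q k : nat) : int := ((q%:Z ^+ k - 1) %/ (q%:Z - 1))%Z.

(* g = ((q^c-2)(q^(a-1)+q^(b-1)-2) + (q^c-q)) / 2, with a = b+1, c = a+b
   (the numerator is always even). *)
Definition genus (q b : nat) : int :=
  let a := b.+1 in let c := (a + b)%N in
  (((q%:Z ^+ c - 2) * (q%:Z ^+ a.-1 + q%:Z ^+ b.-1 - 2) + (q%:Z ^+ c - q%:Z)) %/ 2)%Z.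

Definition in_Omega (q b : nat) (v r s t : int) (x : int * int * int) : bool :=
  let: (i, j, k) := x in
  let a := b.+1 in let c := (a + b)%N in
  let Q : int := q%:Z ^+ c - 1 in
  [&& - v <= i,
      - r <= i + Q * k,
      i + Q * k < - r + Q,
      - s <= - (q%:Z ^+ a) * i + Q * j,
      - (q%:Z ^+ a) * i + Q * j < Q - s &
      - t <= q%:Z ^+ a.-1 * Nk q b * i - q%:Z ^+ b.-1 * Nk q c * j
             - (q%:Z ^+ a.-1 - 1) * Nk q c * k].

Definition has_card (T : eqType) (P : pred T) (m : int) : Prop :=
  exists l : seq T, [/\ uniq l, (forall x, (x \in l) = P x) & (size l)%:Z = m].

(* Main.v *)
Require Import Defs.
From HB Require Import structures.
From mathcomp Require Import all_boot all_order all_algebra.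
From mathcomp Require Import ring lra zify.
Import Order.TTheory GRing.Theory Num.Theory.
Local Open Scope ring_scope.

Lemma sum_nat_int (n : nat) :
  2 * \sum_(0 <= m < n) (m%:Z) = n%:Z * (n%:Z - 1).
Proof.
elim: n => [|n IH]; first by rewrite big_geq.
rewrite big_nat_recr //= mulrDr IH intS; ring.
Qed.

Lemma modz_nat_lt (x : int) (n : nat) : (0 < n)%N -> (absz (x %% n%:Z)%Z < n)%N.
Proof.
move=> n0; rewrite -ltz_nat gez0_abs ?modz_ge0 ?ltz_pmod //;
  by rewrite ?ltz_nat // eqz_nat -lt0n.
Qed.

Lemma modsum_block (n : nat) (a u L t : int) : (0 < n)%N ->
  (n%:Z %| u * a - 1)%Z ->
  \sum_(0 <= m < n) ((a * (L + m%:Z) + t) %% n%:Z)%Z = \sum_(0 <= m < n) m%:Z.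
Proof.
move=> n0 hu; rewrite !big_mkord.
pose h := fun m : 'I_n => Ordinal (@modz_nat_lt (a * (L + (m : nat)%:Z) + t) n n0).
have nn0 : n%:Z != 0 by rewrite eqz_nat -lt0n.
have hinj : injective h.
  move=> i j /(congr1 (fun x : 'I_n => (x : nat)%:Z)) /=.
  rewrite !gez0_abs ?modz_ge0 // => /eqP; rewrite -/(_ == _ %[mod _])%Z eqz_mod_dvd.
  have -> : a * (L + (i:nat)%:Z) + t - (a * (L + (j:nat)%:Z) + t) = a * ((i:nat)%:Z - (j:nat)%:Z) by ring.
  move=> hd.
  have h1 : (n%:Z %| u * (a * ((i:nat)%:Z - (j:nat)%:Z)))%Z by apply: dvdz_mull.
  have h2 : (n%:Z %| (u * a - 1) * ((i:nat)%:Z - (j:nat)%:Z))%Z by apply: dvdz_mulr.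
  have : (n%:Z %| (i:nat)%:Z - (j:nat)%:Z)%Z.
    have -> : (i:nat)%:Z - (j:nat)%:Z = u * (a * ((i:nat)%:Z - (j:nat)%:Z)) - (u * a - 1) * ((i:nat)%:Z - (j:nat)%:Z) by ring.
    by rewrite rpredB.
  rewrite -eqz_mod_dvd !modz_small ?ltz_nat ?ltn_ord ?andbT // => /eqP [] ij.
  by apply: ord_inj.
rewrite [RHS](reindex_inj hinj) /=; apply: eq_bigr => i _.
by rewrite gez0_abs ?modz_ge0.
Qed.

Lemma modsum (n d : nat) (a u L t : int) : (0 < n)%N ->
  (n%:Z %| u * a - 1)%Z ->
  2 * \sum_(0 <= m < d * n) ((a * (L + m%:Z) + t) %% n%:Z)%Z
    = d%:Z * (n%:Z * (n%:Z - 1)).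
Proof.
move=> n0 hu; elim: d => [|d IH]; first by rewrite mul0n big_geq // mulr0 mul0r.
rewrite mulSnr (@big_cat_nat _ _ _ (d * n)%N) ?leq_addr //=.
have -> : \sum_(d * n <= i < d * n + n) ((a * (L + i%:Z) + t) %% n%:Z)%Z
   = \sum_(0 <= i < n) ((a * ((L + (d * n)%N%:Z) + i%:Z) + t) %% n%:Z)%Z.
  rewrite -{1}(add0n (d * n)%N) big_addn addKn.
  by apply: eq_bigr => i _; rewrite PoszD; congr (_ %% _)%Z; ring.
rewrite (modsum_block _ _ _ _ _ n0 hu) mulrDr IH sum_nat_int intS; ring.
Qed.

Lemma Nk_mul (q n : nat) : (1 < q)%N -> (q%:Z - 1) * Nk q n = q%:Z ^+ n - 1.
Proof.
move=> hq; rewrite /Nk subrX1 mulKz //.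
by rewrite subr_eq0 -[1]/(1%:Z) eqz_nat; case: q hq => [|[]].
Qed.

Lemma box (Q x k r : int) : 0 < Q ->
  (- r <= x + Q * k) && (x + Q * k < - r + Q) = (k == - ((x + r) %/ Q)%Z).
Proof.
move=> Q0; have Qn0 : Q != 0 by rewrite gt_eqF.
apply/idP/eqP => [/andP [h1 h2] | ->].
  have -> : x + r = (- k) * Q + (x + r + Q * k) by ring.
  rewrite divzMDl // divz_small ?addr0 ?opprK //.
  rewrite gez0_abs; last exact: ltW.
  apply/andP; split; lra.
have := divz_eq (x + r) Q; have := modz_ge0 (x + r) Qn0; have := ltz_pmod (x + r) Q0.
set m := ((x + r) %% Q)%Z; set d := ((x + r) %/ Q)%Z => g1 g2 g3.
have ex : x = d * Q + m - r by lra.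
have -> : x + Q * - d = m - r by rewrite ex; ring.
apply/andP; split; lra.
Qed.

Section Main.
Variables (q b : nat) (r s : int).
Hypotheses (hq : (1 < q)%N) (hb : (0 < b)%N).

Definition cc := (b.+1 + b)%N.
Definition QQ : int := q%:Z ^+ cc - 1.
Definition kk (i : int) : int := - ((i + r) %/ QQ)%Z.
Definition jj (i : int) : int := - ((- (q%:Z ^+ b.+1) * i + s) %/ QQ)%Z.
Definition ff (i : int) : int :=
  q%:Z ^+ b * Nk q b * i - q%:Z ^+ b.-1 * Nk q cc * jj i
  - (q%:Z ^+ b - 1) * Nk q cc * kk i.
Definition Xf (i : int) : int := ((i + r) %% QQ)%Z - r.
Definition Yf (i : int) : int := ((- (q%:Z ^+ b.+1) * i + s) %% QQ)%Z - s.

Lemma q_gt1 : 1 < q%:Z.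
Proof. by rewrite -[1]/(1%:Z) ltz_nat. Qed.

Lemma QQ_gt0 : 0 < QQ.
Proof.
rewrite /QQ; have -> : q%:Z ^+ cc = (q ^ cc)%N%:Z by rewrite -natz -natrX natz.
rewrite subr_gt0 -[1]/(1%:Z) ltz_nat.
by rewrite -(exp1n cc) ltn_exp2r // /cc.
Qed.

Lemma and6E (a1 a2 a3 a4 a5 a6 : bool) :
  [&& a1, a2, a3, a4, a5 & a6] = [&& a1, a2 && a3, a4 && a5 & a6].
Proof. by case: a1; case: a2; case: a3; case: a4; case: a5; case: a6. Qed.

Lemma in_Omega_iff v t i j k :
  in_Omega q b v r s t (i, j, k) =
  [&& - v <= i, j == jj i, k == kk i & - t <= ff i].
Proof.
rewrite /in_Omega /= -/cc -/QQ.
have h1 := box QQ i k r QQ_gt0.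
have h2 := box QQ (- (q%:Z ^+ b.+1) * i) j s QQ_gt0.
rewrite (addrC QQ (- s)) and6E h1 h2 -/(kk i) -/(jj i).
case: (eqVneq k (kk i)) => [->|nk]; case: (eqVneq j (jj i)) => [->|nj] //=;
  by rewrite ?andbF.
Qed.

Notation qz := (q%:Z).
Notation Nb := (Nk q b).
Notation Nc := (Nk q cc).

Lemma Nb_eq : (qz - 1) * Nb = qz ^+ b - 1.
Proof. exact: Nk_mul. Qed.
Lemma Nc_eq : (qz - 1) * Nc = QQ.
Proof. exact: Nk_mul. Qed.
Lemma qB : qz ^+ b.-1 * qz = qz ^+ b.
Proof. by case: b hb => // b' _; rewrite -exprSr. Qed.
Lemma qa : qz ^+ b.+1 = qz * qz ^+ b.
Proof. by rewrite exprS. Qed.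
Lemma qc : QQ = qz * qz ^+ b * qz ^+ b - 1.
Proof. by rewrite /QQ /cc exprD exprS. Qed.

Lemma X_eq i : Xf i = i + QQ * kk i.
Proof.
rewrite /Xf /kk; have := divz_eq (i + r) QQ.
set m := ((i + r) %% QQ)%Z; set d := ((i + r) %/ QQ)%Z => h.
have -> : m = i + r - d * QQ by lra.
ring.
Qed.

Lemma Y_eq i : Yf i = - (qz ^+ b.+1) * i + QQ * jj i.
Proof.
rewrite /Yf /jj; have := divz_eq (- (qz ^+ b.+1) * i + s) QQ.
set m := ((- (qz ^+ b.+1) * i + s) %% QQ)%Z.
set d := ((- (qz ^+ b.+1) * i + s) %/ QQ)%Z => h.
have -> : m = - (qz ^+ b.+1) * i + s - d * QQ by lra.
ring.
Qed.

Lemma ff_eq i :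
  (qz - 1) * ff i = - (i + qz ^+ b.-1 * Yf i + (qz ^+ b - 1) * Xf i).
Proof.
have -> : (qz - 1) * ff i = qz ^+ b * ((qz - 1) * Nb) * i
   - qz ^+ b.-1 * ((qz - 1) * Nc) * jj i - (qz ^+ b - 1) * ((qz - 1) * Nc) * kk i.
  by rewrite /ff; ring.
rewrite Nb_eq Nc_eq X_eq Y_eq qa.
have -> : - (i + qz ^+ b.-1 * (- (qz * qz ^+ b) * i + QQ * jj i) +
   (qz ^+ b - 1) * (i + QQ * kk i)) =
   - (i - (qz ^+ b.-1 * qz) * qz ^+ b * i + qz ^+ b.-1 * QQ * jj i +
   (qz ^+ b - 1) * (i + QQ * kk i)) by ring.
rewrite qB; ring.
Qed.

Lemma Xf_per i n : Xf (i + n * QQ) = Xf i.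
Proof.
rewrite /Xf (_ : i + n * QQ + r = n * QQ + (i + r)); last by ring.
by rewrite modzMDl.
Qed.

Lemma Yf_per i n : Yf (i + n * QQ) = Yf i.
Proof.
rewrite /Yf (_ : - (qz ^+ b.+1) * (i + n * QQ) + s
   = (- (qz ^+ b.+1) * n) * QQ + (- (qz ^+ b.+1) * i + s)); last by ring.
by rewrite modzMDl.
Qed.

Lemma qm1_neq0 : qz - 1 != 0.
Proof. by have := q_gt1; rewrite subr_eq0; case: ltgtP. Qed.

Lemma ff_per i n : ff (i + n * QQ) = ff i - n * Nc.
Proof.
apply: (mulfI qm1_neq0); rewrite ff_eq Xf_per Yf_per [RHS]mulrBr ff_eq.
rewrite -Nc_eq; ring.
Qed.

Lemma ff_mod i t :
  ((t + ff i) %% Nc)%Z = ((qz ^+ b * Nb * i + t) %% Nc)%Z.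
Proof.
rewrite (_ : t + ff i = (- qz ^+ b.-1 * jj i - (qz ^+ b - 1) * kk i) * Nc
   + (qz ^+ b * Nb * i + t)); last by rewrite /ff; ring.
by rewrite modzMDl.
Qed.

Lemma Nc_gt0 : 0 < Nc.
Proof.
have := QQ_gt0; rewrite -Nc_eq; have := q_gt1.
rewrite -subr_gt0 => h; rewrite pmulr_rgt0 //.
Qed.

Lemma Xf_bd i : - r <= Xf i < QQ - r.
Proof.
rewrite /Xf; have := modz_ge0 (i + r) (lt0r_neq0 QQ_gt0).
have := ltz_pmod (i + r) QQ_gt0; set m := ((i + r) %% QQ)%Z => h1 h2.
apply/andP; split; lra.
Qed.

Lemma Yf_bd i : - s <= Yf i < QQ - s.
Proof.
rewrite /Yf; have := modz_ge0 (- (qz ^+ b.+1) * i + s) (lt0r_neq0 QQ_gt0).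
have := ltz_pmod (- (qz ^+ b.+1) * i + s) QQ_gt0.
set m := ((- (qz ^+ b.+1) * i + s) %% QQ)%Z => h1 h2.
apply/andP; split; lra.
Qed.

Lemma decomp (Q m n : int) : 0 < Q -> 0 <= m < Q ->
  ((n * Q + m) %/ Q)%Z = n /\ ((n * Q + m) %% Q)%Z = m.
Proof.
move=> Q0 hm; have Qn0 : Q != 0 by rewrite gt_eqF.
split; first by rewrite divzMDl // divz_small ?addr0 // gez0_abs // ltW.
by rewrite modzMDl modz_small.
Qed.

Definition cnt (t i : int) : int := ((t + ff i) %/ Nc)%Z + 1.
Definition trip (i : int) : int * int * int := (i, jj i, kk i).
Definition l0 (v t : int) : seq int :=
  [seq - v + m%:Z + n%:Z * QQ | m <- iota 0 `|QQ|%N,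
                                 n <- iota 0 `|cnt t (- v + m%:Z)|%N].

Lemma QQn : `|QQ|%N%:Z = QQ.
Proof. by rewrite gez0_abs // ltW // QQ_gt0. Qed.

Lemma card_main v t :
  (forall m : nat, (m < `|QQ|)%N -> 0 <= t + ff (- v + m%:Z)) ->
  has_card (in_Omega q b v r s t) (\sum_(0 <= m < `|QQ|%N) cnt t (- v + m%:Z)).
Proof.
move=> hv; have Q0 := QQ_gt0; have Nc0 := Nc_gt0.
have cnt0 m : (m < `|QQ|)%N -> 0 <= cnt t (- v + m%:Z).
  move=> hm; rewrite /cnt; have := hv m hm; rewrite -(divz_ge0 _ Nc0) => h; lra.
exists (map trip (l0 v t)); split.
- rewrite map_inj_uniq; last by move=> x y [].
  apply: allpairs_uniq_dep; first exact: iota_uniq.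
    by move=> x _; exact: iota_uniq.
  move=> [m1 n1] [m2 n2] /allpairsPdep [x1 [y1 [hx1 _ e1]]]
    /allpairsPdep [x2 [y2 [hx2 _ e2]]] /= e.
  have ex1 : m1 = x1 by case: e1.
  have ex2 : m2 = x2 by case: e2.
  subst x1 x2.
  have h1 : 0 <= m1%:Z < QQ by rewrite -QQn ltz_nat; rewrite mem_iota in hx1.
  have h2 : 0 <= m2%:Z < QQ by rewrite -QQn ltz_nat; rewrite mem_iota in hx2.
  have e' : n1%:Z * QQ + m1%:Z = n2%:Z * QQ + m2%:Z by lra.
  have [d1 md1] := decomp QQ m1%:Z n1%:Z Q0 h1; have [d2 md2] := decomp QQ m2%:Z n2%:Z Q0 h2.
  have em : m1 = m2 by apply/eqP; rewrite -eqz_nat -md1 e' md2.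
  have en : n1 = n2 by apply/eqP; rewrite -eqz_nat -d1 e' d2.
  by subst.
- move=> [[i j] k]; rewrite in_Omega_iff; apply/idP/idP.
  + case/mapP => y /allpairsPdep [m [n [hm hn ->]]] [-> -> ->].
    rewrite !eqxx /=; rewrite mem_iota in hm; rewrite mem_iota in hn.
    rewrite ff_per; have hc := cnt0 m hm.
    have hn' : n%:Z < cnt t (- v + m%:Z) by rewrite -(gez0_abs hc) ltz_nat.
    have hn2 : n%:Z <= ((t + ff (- v + m%:Z)) %/ Nc)%Z by move: hn'; rewrite /cnt; lia.
    rewrite lez_divRL // in hn2.
    have : 0 <= n%:Z * QQ by rewrite mulr_ge0 // ltW.
    have hm0 : 0 <= m%:Z by []. move=> h; apply/andP; split; lra.
  + case/and4P => hi /eqP -> /eqP -> hf; apply/mapP; exists i => //.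
    apply/allpairsPdep.
    have Qn0 : QQ != 0 by rewrite gt_eqF.
    have hd := divz_eq (i + v) QQ.
    have hm0 := modz_ge0 (i + v) Qn0.
    have hdv : 0 <= ((i + v) %/ QQ)%Z by rewrite divz_ge0 //; lra.
    set m := `|((i + v) %% QQ)%Z|%N; set n := `|((i + v) %/ QQ)%Z|%N.
    have em : m%:Z = ((i + v) %% QQ)%Z by rewrite /m gez0_abs.
    have en : n%:Z = ((i + v) %/ QQ)%Z by rewrite /n gez0_abs.
    have ei : i = - v + m%:Z + n%:Z * QQ by rewrite em en; lra.
    have hmQ : (m < `|QQ|)%N.
      by rewrite -ltz_nat QQn em ltz_pmod.
    exists m, n; split => //; first by rewrite mem_iota.
    rewrite mem_iota /= add0n -ltz_nat gez0_abs ?cnt0 //.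
    rewrite ei ff_per in hf.
    have : n%:Z * Nc <= t + ff (- v + m%:Z) by lra.
    rewrite -lez_divRL // /cnt => h; lia.
- rewrite size_map size_allpairs_dep sumnE big_map -natz natr_sum.
  rewrite /index_iota subn0; apply: eq_big_seq => m hm.
  rewrite mem_iota in hm.
  by rewrite size_iota natz gez0_abs ?cnt0.
Qed.

Lemma Ncn : `|Nc|%N%:Z = Nc.
Proof. by rewrite gez0_abs // ltW // Nc_gt0. Qed.

Lemma Qn_split : `|QQ|%N = ((q - 1) * `|Nc|)%N.
Proof.
rewrite -Nc_eq abszM; congr (_ * _)%N.
by rewrite -[1]/(1%:Z) subzn ?absz_nat // ltnW.
Qed.

Lemma sumX v :
  2 * \sum_(0 <= m < `|QQ|%N) Xf (- v + m%:Z) = QQ * (QQ - 1) - 2 * QQ * r.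
Proof.
have := @modsum `|QQ|%N 1 1 1 (- v) r.
rewrite mul1n QQn mul1r => h.
have -> : \sum_(0 <= m < `|QQ|%N) Xf (- v + m%:Z)
   = \sum_(0 <= m < `|QQ|%N) (((1 * (- v + m%:Z) + r) %% QQ)%Z - r).
  by apply: eq_bigr => m _; rewrite mul1r.
rewrite sumrB sumr_const_nat subn0 mulrBr h ?absz_gt0 ?gt_eqF ?QQ_gt0 //.
  by rewrite -[r *+ _]mulr_natr (natz `|QQ|) QQn; ring.
Qed.

Lemma sumY v :
  2 * \sum_(0 <= m < `|QQ|%N) Yf (- v + m%:Z) = QQ * (QQ - 1) - 2 * QQ * s.
Proof.
have := @modsum `|QQ|%N 1 (- (qz ^+ b.+1)) (- (qz ^+ b)) (- v) s.
rewrite mul1n QQn mul1r => h.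
rewrite /Yf sumrB sumr_const_nat subn0 mulrBr h ?absz_gt0 ?gt_eqF ?QQ_gt0 //.
  by rewrite -[s *+ _]mulr_natr (natz `|QQ|) QQn; ring.
rewrite (_ : - qz ^+ b * - qz ^+ b.+1 - 1 = QQ) ?dvdzz //.
by rewrite qc qa; ring.
Qed.

Lemma NbNc : Nb * (1 + qz ^+ b) = Nc - qz ^+ b * qz ^+ b.
Proof.
apply: (mulfI qm1_neq0).
rewrite mulrA Nb_eq mulrBr Nc_eq qc; ring.
Qed.


Lemma qm1n : ((q - 1)%N : int) = qz - 1.
Proof. by rewrite -subzn // ltnW. Qed.

Lemma sumM v t :
  2 * \sum_(0 <= m < `|QQ|%N) ((qz ^+ b * Nb * (- v + m%:Z) + t) %% Nc)%Z
  = (qz - 1) * (Nc * (Nc - 1)).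
Proof.
have Nc0 : (0 < `|Nc|)%N by rewrite absz_gt0 gt_eqF ?Nc_gt0.
have := @modsum `|Nc|%N (q - 1) (qz ^+ b * Nb)
   (- (qz * qz * qz ^+ b) * (1 + qz ^+ b)) (- v) t Nc0.
rewrite Ncn -Qn_split qm1n; apply.
have -> : - (qz * qz * qz ^+ b) * (1 + qz ^+ b) * (qz ^+ b * Nb) - 1
   = Nc * (- (qz * qz * qz ^+ b * qz ^+ b) + (qz * qz ^+ b * qz ^+ b + 1) * (qz - 1)).
  have h1 := NbNc; have h2 := Nc_eq; rewrite qc in h2.
  move: h1 h2; generalize Nb Nc qz => nb nc x h1 h2.
  set A := x ^+ b in h1 h2 *.
  have -> : - (x * x * A) * (1 + A) * (A * nb) - 1
     = - (x * x * A * A) * (nb * (1 + A)) - 1 by ring.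
  have -> : nc * (- (x * x * A * A) + (x * A * A + 1) * (x - 1))
     = - (x * x * A * A) * nc + (x * A * A + 1) * ((x - 1) * nc) by ring.
  rewrite h1 h2; ring.
by apply: dvdz_mulr; rewrite dvdzz.
Qed.

Lemma S_eq v t :
  \sum_(0 <= m < `|QQ|%N) cnt t (- v + m%:Z) =
  1 - genus q b + v + (qz ^+ b - 1) * r + qz ^+ b.-1 * s + (qz - 1) * t.
Proof.
set S := \sum_(0 <= m < `|QQ|%N) cnt t (- v + m%:Z).
set SF := \sum_(0 <= m < `|QQ|%N) ff (- v + m%:Z).
set SM := \sum_(0 <= m < `|QQ|%N) ((qz ^+ b * Nb * (- v + m%:Z) + t) %% Nc)%Z.
set SX := \sum_(0 <= m < `|QQ|%N) Xf (- v + m%:Z).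
set SY := \sum_(0 <= m < `|QQ|%N) Yf (- v + m%:Z).
set Sm := \sum_(0 <= m < `|QQ|%N) (m%:Z).
have Nc0 : Nc != 0 by rewrite gt_eqF ?Nc_gt0.
have E1 : Nc * S = QQ * t + SF - SM + QQ * Nc.
  rewrite /S mulr_sumr.
  have -> : \sum_(0 <= m < `|QQ|%N) Nc * cnt t (- v + m%:Z)
     = \sum_(0 <= m < `|QQ|%N) ((t + Nc + ff (- v + m%:Z))
          - ((qz ^+ b * Nb * (- v + m%:Z) + t) %% Nc)%Z).
    apply: eq_bigr => m _; rewrite /cnt -ff_mod.
    have := divz_eq (t + ff (- v + m%:Z)) Nc.
    set d := ((t + ff (- v + m%:Z)) %/ Nc)%Z; set e := ((t + ff (- v + m%:Z)) %% Nc)%Z.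
    move=> h; rewrite mulrDr mulr1 (mulrC Nc d); lia.
  rewrite sumrB big_split /= sumr_const_nat subn0 -/SF -/SM.
  rewrite -[(t + Nc) *+ _]mulr_natr (natz `|QQ|) QQn; ring.
have E2 : (qz - 1) * SF = - (QQ * (- v) + Sm + qz ^+ b.-1 * SY + (qz ^+ b - 1) * SX).
  rewrite /SF mulr_sumr.
  under eq_bigr => m _ do rewrite ff_eq.
  rewrite sumrN !big_split /= sumr_const_nat subn0 -!mulr_sumr -/Sm -/SX -/SY.
  by rewrite -[(- v) *+ _]mulr_natr (natz `|QQ|) QQn mulrC.
have E3 : 2 * Sm = QQ * (QQ - 1) by rewrite /Sm sum_nat_int QQn.
have E4 := sumX v; have E5 := sumY v; have E6 := sumM v t.
rewrite -/SX in E4; rewrite -/SY in E5; rewrite -/SM in E6.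
have QQ0 : QQ != 0 by rewrite gt_eqF ?QQ_gt0.
have key : 2 * S = 2 * (qz - 1) * t + 2 * v - (QQ - 1) - qz ^+ b.-1 * (QQ - 1)
   + 2 * qz ^+ b.-1 * s - (qz ^+ b - 1) * (QQ - 1) + 2 * (qz ^+ b - 1) * r
   - (qz - 1) * (Nc - 1) + 2 * QQ.
  apply: (mulfI QQ0).
  have H0 := Nc_eq.
  clearbody S SF SM SX SY Sm.
  move: H0 E1 E2 E3 E4 E5 E6.
  generalize QQ Nc qz => Q N x.
  move=> H0 E1 E2 E3 E4 E5 E6.
  have e1 : Q * (2 * S) = 2 * (x - 1) * (N * S) by rewrite -H0; ring.
  have e2 : 2 * (x - 1) * (N * S) = 2 * ((x - 1) * SF) - (x - 1) * (2 * SM)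
       + 2 * (x - 1) * (Q * t + Q * N) by rewrite E1; ring.
  have e3 : 2 * ((x - 1) * SF) - (x - 1) * (2 * SM) + 2 * (x - 1) * (Q * t + Q * N)
     = - 2 * (Q * - v) - 2 * Sm - x ^+ b.-1 * (2 * SY) - (x ^+ b - 1) * (2 * SX)
       - ((x - 1) * N) * ((x - 1) * (N - 1)) + 2 * (x - 1) * Q * t
       + 2 * Q * ((x - 1) * N).
    by rewrite E2 E6; ring.
  rewrite e1 e2 e3 E3 E4 E5 H0; ring.
have hg : genus q b = 1 + v + (qz ^+ b - 1) * r + qz ^+ b.-1 * s + (qz - 1) * t - S.
  rewrite /genus; cbv zeta; rewrite -/cc.
  have -> : qz ^+ cc = QQ + 1 by rewrite /QQ; ring.
  rewrite -[(b.+1).-1]/b.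
  set w := 1 + v + (qz ^+ b - 1) * r + qz ^+ b.-1 * s + (qz - 1) * t - S.
  have -> : (QQ + 1 - 2) * (qz ^+ b + qz ^+ b.-1 - 2) + (QQ + 1 - qz) = 2 * w.
    have -> : 2 * w = 2 * (1 + v + (qz ^+ b - 1) * r + qz ^+ b.-1 * s + (qz - 1) * t) - 2 * S
      by rewrite /w; ring.
    have hN : (qz - 1) * (Nc - 1) = QQ - (qz - 1) by rewrite mulrBr Nc_eq mulr1.
    rewrite key hN; ring.
  by rewrite mulKz.
rewrite hg; ring.
Qed.

Lemma ff_lb v t m : (m < `|QQ|)%N ->
  QQ + qz ^+ b.-1 * (QQ - s) + (qz ^+ b - 1) * (QQ - r) - (qz - 1) * t <= v ->
  0 <= t + ff (- v + m%:Z).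
Proof.
move=> hm hv.
have q1 : 0 < qz - 1 by rewrite subr_gt0 q_gt1.
rewrite -(pmulr_rge0 _ q1) mulrDr ff_eq.
have hmQ : m%:Z < QQ by rewrite -QQn ltz_nat.
have hm0 : 0 <= m%:Z by [].
have /andP [_ hY] := Yf_bd (- v + m%:Z).
have /andP [_ hX] := Xf_bd (- v + m%:Z).
have hB : 0 <= qz ^+ b.-1 by rewrite exprn_ge0 // ltW // (lt_trans ltr01 q_gt1).
have hA : 0 <= qz ^+ b - 1.
  rewrite subr_ge0 exprn_ege1 // ltW // q_gt1.
have h1 : qz ^+ b.-1 * Yf (- v + m%:Z) <= qz ^+ b.-1 * (QQ - s) by rewrite ler_wpM2l // ltW.
have h2 : (qz ^+ b - 1) * Xf (- v + m%:Z) <= (qz ^+ b - 1) * (QQ - r) by rewrite ler_wpM2l // ltW.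
lra.
Qed.

End Main.

Theorem proposition4 (p e b : nat) :
  prime p -> (0 < e)%N -> (0 < b)%N -> ~~ (p %| b.+1)%N ->
  let q := (p ^ e)%N in
  forall r s t : int, exists C : int, forall v : int, C <= v ->
    has_card (in_Omega q b v r s t)
      (1 - genus q b + v + (q%:Z ^+ b - 1) * r + q%:Z ^+ b.-1 * s
         + (q%:Z - 1) * t).
Proof.
move=> pp e0 b0 _ q r s t.
have hq : (1 < q)%N by rewrite /q -{1}(expn0 p) ltn_exp2l // prime_gt1.
exists (QQ q b + q%:Z ^+ b.-1 * (QQ q b - s) + (q%:Z ^+ b - 1) * (QQ q b - r)
        - (q%:Z - 1) * t) => v hv.
rewrite -(S_eq q b r s hq b0 v t).
apply: card_main => // m hm.
exact: ff_lb.
Qed.
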